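(* Let $p$ be prime, $f:\mathrm{GF}(p)^n\to\mathrm{GF}(p)$ a polynomial function and $t=\prod_{j=1}^k x_{i_j}^{m_j}$ with distinct indices and $1\le m_j\le p-1$. Write $f=t\,f_{S(t)}+r$ with no monomial of $r$ divisible by $t$, and write $f_{S(t)}=t_1g_1+\cdots+t_ug_u$ where $g_1,\ldots,g_u$ are polynomials not depending on any of $x_{i_1},\ldots,x_{i_k}$ and $t_1,\ldots,t_u$ are all the distinct terms (monomials) in the variables $x_{i_1},\ldots,x_{i_k}$ appearing in $f_{S(t)}$. Let $\mathbf{u}$ be the $n$-tuple with $0$ in positions $i_1,\ldots,i_k$ and indeterminates elsewhere. Then \[ f_t(\mathbf{u}) = c_1g_1+\cdots+c_ug_u, \] where, if $t_s=x_{i_1}^{\ell_1}\cdots x_{i_k}^{\ell_k}$, the constant is $c_s=\prod_{j=1}^k D(m_j+\ell_j,m_j+\ell_j,m_j)\in\mathrm{GF}(p)$. In particular, if $f_{S(t)}$ does not depend on any of $x_{i_1},\ldots,x_{i_k}$, then $f_t=m_1!\cdots m_k!\,f_{S(t)}$.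
   Context: Polynomial functions over $\mathrm{GF}(p)$ are represented by their unique polynomial of degree at most $p-1$ in each variable. $f_t=\Delta^{(m_1)}_{\mathbf{e}_{i_1},\ldots,\mathbf{e}_{i_1}}\cdots\Delta^{(m_k)}_{\mathbf{e}_{i_k},\ldots,\mathbf{e}_{i_k}} f$ (difference $m_j$ times w.r.t. $x_{i_j}$ with step $1$), where $(\Delta_{\mathbf{a}} f)(\mathbf{x}) = f(\mathbf{x}+\mathbf{a})-f(\mathbf{x})$. For $1\le m\le j\le d$, $D(d,j,m)=\sum\binom{d}{i_1,\ldots,i_m,d-j}$ over $(i_1,\ldots,i_m)\in\{1,\ldots,j-m+1\}^m$ with $i_1+\cdots+i_m=j$ (multinomials read mod $p$). *)

(* Defs.v *)
From HB Require Import structures.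
From mathcomp Require Import all_boot all_order all_algebra.
Set Implicit Arguments. Unset Strict Implicit. Unset Printing Implicit Defensive.
Import GRing.Theory.
Local Open Scope ring_scope.

Definition expo (n p : nat) := {ffun 'I_n -> 'I_p}.

(* A polynomial (reduced: degree <= p-1 in each variable) over GF(p),
   given by its coefficient function on exponent vectors. *)
Definition mpoly (n p : nat) := {ffun expo n p -> 'F_p}.

Definition point (n p : nat) := {ffun 'I_n -> 'F_p}.

Definition meval n p (a : mpoly n p) (x : point n p) : 'F_p :=
  \sum_(e : expo n p) a e * \prod_(i < n) x i ^+ (e i).

Definition shift n p (i : 'I_n) (x : point n p) : point n p :=
  [ffun j => x j + (j == i)%:R].

Definition delta n p (i : 'I_n) (g : point n p -> 'F_p) : point n p -> 'F_p :=
  fun x => g (shift i x) - g x.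

(* f_t for t = prod_i x_i^{m i}: differentiate m i times w.r.t. x_i
   (for each i; m i = 0 means no differencing in x_i). *)
Definition fdiff n p (m : expo n p) (g : point n p -> 'F_p) : point n p -> 'F_p :=
  foldr (fun i h => iter (m i) (delta i) h) g (enum 'I_n).

Definition insupp n p (m : expo n p) (i : 'I_n) : bool := (0 < m i)%N.

(* f_{S(t)}: the unique polynomial with f = t * f_{S(t)} + r, where no
   monomial of r is divisible by t; its coefficient at e is the
   coefficient of f at t * x^e (i.e. at exponent m + e). *)
Definition fS n p (a : mpoly n p) (m : expo n p) : mpoly n p :=
  [ffun e : expo n p => \sum_(e0 : expo n p | [forall i, (e0 i : nat) == (m i + e i)%N]) a e0].

Definition supported n p (m : expo n p) (l : expo n p) : bool :=
  [forall i, ~~ insupp m i ==> ((l i : nat) == 0%N)].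

(* g_l: the coefficient polynomial of the term x^l (l supported on S(t))
   in f_{S(t)}, a polynomial not depending on the variables of S(t). *)
Definition gpart n p (b : mpoly n p) (m : expo n p) (l : expo n p) : mpoly n p :=
  [ffun e : expo n p => if [forall i, insupp m i ==> ((e i : nat) == 0%N)] then
     \sum_(e0 : expo n p | [forall i, (e0 i : nat) == (l i + e i)%N]) b e0
   else 0].

Definition multinom (d j k : nat) (t : 'I_k -> nat) : nat :=
  (d`! %/ ((\prod_(r < k) (t r)`!) * (d - j)`!))%N.

(* D(d,j,m) = sum of binom{d}{i_1,...,i_m,d-j} over
   (i_1,...,i_m) in {1,...,j-m+1}^m with i_1+...+i_m = j. *)
Definition Dnum (d j m : nat) : nat :=
  (\sum_(t : {ffun 'I_m -> 'I_(j - m + 2)} |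
       [forall r, (0 < (t r : nat))%N] && ((\sum_(r < m) (t r : nat)) == j)%N)
     multinom d j (fun r => (t r : nat)))%N.

Definition cconst n p (m l : expo n p) : 'F_p :=
  \prod_(i < n | insupp m i) (Dnum (m i + l i) (m i + l i) (m i))%:R.

(* Main.v *)
Require Import Defs.
From HB Require Import structures.
From mathcomp Require Import all_boot all_order all_algebra.
From mathcomp Require Import zify ring.
From Stdlib Require Import FunctionalExtensionality.
Set Implicit Arguments. Unset Strict Implicit. Unset Printing Implicit Defensive.
Import GRing.Theory.

Lemma dvd_mult k (t : 'I_k -> nat) d :
  (\sum_(r < k) t r <= d)%N ->
  (\prod_(r < k) (t r)`! * (d - \sum_(r < k) t r)`!) %| d`!.
Proof.
elim: k t d => [|k IH] t d.
  by rewrite big_ord0 big_ord0 mul1n subn0 dvdnn.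
rewrite big_ord_recl big_ord_recl => H.
set s := \sum_(i < k) t (lift ord0 i).
have H1 : (t ord0 <= d)%N by lia.
have H2 : (s <= d - t ord0)%N by lia.
have := IH (fun i => t (lift ord0 i)) (d - t ord0) H2.
rewrite -/s => D.
rewrite -(bin_fact H1) subnDA.
rewrite [X in _ %| X]mulnCA -/s.
rewrite [X in X %| _](_ : _ = (t ord0)`! * (\prod_(r < k) (t (lift ord0 r))`! * (d - t ord0 - s)`!))%N; last by ring.
apply: dvdn_mul; first exact: dvdnn.
exact: dvdn_mull.
Qed.

Lemma multinom_rec d k (t : 'I_k.+1 -> nat) :
  (\sum_(r < k.+1) t r <= d)%N ->
  multinom d (\sum_(r < k.+1) t r) t =
  (multinom d (\sum_(r < k) t (lift ord0 r)) (fun r => t (lift ord0 r)) *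
   'C(d - \sum_(r < k) t (lift ord0 r), t ord0))%N.
Proof.
rewrite /multinom big_ord_recl big_ord_recl.
set s := \sum_(i < k) t (lift ord0 i).
set A := \prod_(i < k) (t (lift ord0 i))`!.
set i := t ord0 => H.
have Hs : (s <= d)%N by lia.
have Hi : (i <= d - s)%N by lia.
have := @dvd_mult _ (fun r => t (lift ord0 r)) _ Hs.
rewrite -/s -/A => /dvdnP [q Hq].
have Apos : (0 < A)%N by rewrite /A prodn_gt0 // => r; exact: fact_gt0.
rewrite Hq mulnK; last by rewrite muln_gt0 Apos fact_gt0.
rewrite -(bin_fact Hi).
have -> : (d - (i + s) = d - s - i)%N by lia.
have -> : (q * (A * ('C(d - s, i) * (i`! * (d - s - i)`!))) =
   (q * 'C(d - s, i)) * (i`! * A * (d - s - i)`!))%N by ring.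
by rewrite mulnK // !muln_gt0 Apos !fact_gt0.
Qed.


Local Open Scope ring_scope.

Definition fcons (T : Type) k (i : T) (t : {ffun 'I_k -> T}) : {ffun 'I_k.+1 -> T} :=
  [ffun r => if unlift ord0 r is Some j then t j else i].

Lemma fcons0 T k (i : T) (t : {ffun 'I_k -> T}) : fcons i t ord0 = i.
Proof. by rewrite ffunE unlift_none. Qed.

Lemma fconsL T k (i : T) (t : {ffun 'I_k -> T}) j : fcons i t (lift ord0 j) = t j.
Proof. by rewrite ffunE liftK. Qed.

Lemma sum_ffunS (V : nmodType) (T : finType) k (P : pred {ffun 'I_k.+1 -> T})
   (F : {ffun 'I_k.+1 -> T} -> V) :
  \sum_(t | P t) F t = \sum_(i : T) \sum_(t : {ffun 'I_k -> T} | P (fcons i t)) F (fcons i t).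
Proof.
rewrite (reindex (fun q : T * {ffun 'I_k -> T} => fcons q.1 q.2)) /=.
  by rewrite pair_big_dep.
exists (fun t : {ffun 'I_k.+1 -> T} => (t ord0, [ffun j => t (lift ord0 j)])).
  move=> [i t] _ /=; rewrite fcons0; congr (_, _); apply/ffunP => j.
  by rewrite ffunE fconsL.
move=> t _ /=; apply/ffunP => r; rewrite ffunE.
by case: unliftP => [j ->|->]; rewrite ?ffunE.
Qed.

Lemma forallS k (P : pred 'I_k.+1) :
  [forall r, P r] = P ord0 && [forall r : 'I_k, P (lift ord0 r)].
Proof.
apply/forallP/andP => [H|[H0 /forallP H]]; first by split=> //; apply/forallP.
by move=> r; case: (unliftP ord0 r) => [j ->|->].
Qed.

Lemma multinom_ext d j k (t1 t2 : 'I_k -> nat) : t1 =1 t2 -> multinom d j t1 = multinom d j t2.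
Proof. by move=> H; rewrite /multinom (eq_bigr _ (fun r _ => congr1 _ (H r))). Qed.

Definition udelta (R : pzRingType) (g : R -> R) : R -> R := fun y => g (y + 1) - g y.

Definition Mv (R : comPzRingType) (d k : nat) (y : R) : R :=
  \sum_(t : {ffun 'I_k -> 'I_d.+1} | [forall r, (0 < t r)%N] && (\sum_(r < k) (t r : nat) <= d)%N)
    (multinom d (\sum_(r < k) (t r : nat)) (fun r => (t r : nat)))%:R * y ^+ (d - \sum_(r < k) (t r : nat)).

Lemma Mv0 (R : comPzRingType) d (y : R) : Mv d 0 y = y ^+ d.
Proof.
rewrite /Mv (big_pred1 [ffun r : 'I_0 => ord0]); last first.
  move=> t; rewrite big_ord0 /=.
  have -> : [forall r : 'I_0, (0 < t r)%N] by apply/forallP => -[].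
  by apply/esym/eqP/ffunP => -[].
by rewrite big_ord0 subn0 /multinom big_ord0 subn0 mul1n divnn fact_gt0 mul1r.
Qed.

Lemma sum_fcons k d (i : 'I_d.+1) (t : {ffun 'I_k -> 'I_d.+1}) :
  (\sum_(r < k.+1) (fcons i t r : nat) = i + \sum_(r < k) (t r : nat))%N.
Proof. by rewrite big_ord_recl fcons0; congr (_ + _)%N; apply: eq_bigr => r _; rewrite fconsL. Qed.

Lemma pos_fcons k d (i : 'I_d.+1) (t : {ffun 'I_k -> 'I_d.+1}) :
  [forall r, (0 < fcons i t r)%N] = (0 < i)%N && [forall r, (0 < t r)%N].
Proof. by rewrite forallS fcons0; congr (_ && _); apply: eq_forallb => r; rewrite fconsL. Qed.

Lemma mult_fcons k d (i : 'I_d.+1) (t : {ffun 'I_k -> 'I_d.+1}) :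
  (i + \sum_(r < k) (t r : nat) <= d)%N ->
  multinom d (i + \sum_(r < k) (t r : nat)) (fun r => (fcons i t r : nat)) =
  (multinom d (\sum_(r < k) (t r : nat)) (fun r => (t r : nat)) * 'C(d - \sum_(r < k) (t r : nat), i))%N.
Proof.
move=> H.
have := @multinom_rec d k (fun r => (fcons i t r : nat)).
rewrite sum_fcons fcons0 => /(_ H) ->.
have E1 : (\sum_(r < k) (fcons i t (lift ord0 r) : nat) = \sum_(r < k) (t r : nat))%N.
  by apply: eq_bigr => r _; rewrite fconsL.
rewrite E1; congr (_ * _)%N; apply: multinom_ext => r; by rewrite fconsL.
Qed.

Lemma MvS (R : comPzRingType) d k (y : R) : Mv d k.+1 y = Mv d k (y + 1) - Mv d k y.
Proof.
rewrite /Mv sum_ffunS -sumrB.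
under eq_bigr => i _ do rewrite big_mkcond.
rewrite exchange_big /= [RHS]big_mkcond.
apply: eq_bigr => t _.
set s := (\sum_(r < k) (t r : nat))%N.
case Pt: ([forall r, (0 < t r)%N] && (s <= d)%N); last first.
  apply: big1 => i _; rewrite pos_fcons sum_fcons -/s.
  case: (boolP (0 < i)%N) => //= _; case: (boolP [forall r, (0 < t r)%N]) => Hp //=.
  case: ifP => // H; move: Pt; rewrite Hp /=.
  by have -> : (s <= d)%N by lia.
move/andP: Pt => [Hp Hs].
set a := (d - s)%N.
set M := multinom d s _.
transitivity (\sum_(i < d.+1) (if (0 < i)%N && (i + s <= d)%N then (M * 'C(a, i))%:R * y ^+ (a - i) else 0)).
  apply: eq_bigr => i _; rewrite pos_fcons Hp andbT sum_fcons -/s.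
  case: ifP => // /andP [_ H]; rewrite mult_fcons // -/s -/M.
  by congr (_ * y ^+ _); rewrite /a; lia.
rewrite -mulrBr exprDn big_ord_recl /= add0r.
rewrite [in RHS]big_ord_recl /= subn0 expr0 mulr1 bin0 mulr1n addrAC subrr add0r mulr_sumr.
rewrite -(big_mkord xpredT (fun i => M%:R * (y ^+ (a - bump 0 i) * 1 ^+ bump 0 i *+ 'C(a, bump 0 i)))).
rewrite (@big_nat_widen _ _ _ 0 a d) ?leq_subr //.
rewrite -(big_mkord xpredT (fun i => if (bump 0 i + s <= d)%N then (M * 'C(a, bump 0 i))%:R * y ^+ (a - bump 0 i) else 0)).
rewrite [RHS]big_mkcond; apply: eq_bigr => i _ /=.
rewrite /bump /= add1n expr1n mulr1.
have -> : (i < a)%N = (i.+1 + s <= d)%N by rewrite /a; lia.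
by case: ifP => // _; rewrite natrM -mulr_natl; ring.
Qed.

Lemma Mv_iter (R : comPzRingType) k d (y : R) :
  iter k (@udelta R) (fun z => z ^+ d) y = Mv d k y.
Proof.
elim: k y => [|k IH] y; first by rewrite Mv0.
by rewrite iterS /udelta !IH MvS.
Qed.

Lemma sum_pos_ge1 k (t : 'I_k -> nat) r0 :
  (forall r, 0 < t r)%N -> (t r0 + k.-1 <= \sum_(r < k) t r)%N.
Proof.
move=> H; rewrite (bigD1 r0) //= leq_add2l.
have E : (\sum_(i < k | i != r0) 1 = k.-1)%N by rewrite sum1_card cardC1 card_ord.
rewrite -{1}E; apply: leq_sum => r _; exact: H.
Qed.

Lemma sum_pos_ge k (t : 'I_k -> nat) :
  (forall r, 0 < t r)%N -> (k <= \sum_(r < k) t r)%N.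
Proof.
case: k t => [|k] t H //.
apply: leq_trans _ (sum_pos_ge1 ord0 H); rewrite /= addnC -addn1 leq_add2l; exact: H.
Qed.

Lemma Mv_lt (R : comPzRingType) d k (y : R) : (d < k)%N -> Mv d k y = 0.
Proof.
move=> H; rewrite /Mv big_pred0 // => t.
apply/negbTE/negP => /andP [/forallP Hp Hs].
have := sum_pos_ge (t := fun r => (t r : nat)) Hp; rewrite /= => Hk.
by have := leq_trans Hk Hs; rewrite leqNgt H.
Qed.

Lemma Mv_eq (R : comPzRingType) k (y : R) : Mv k.+1 k.+1 y = (k.+1)`!%:R.
Proof.
rewrite /Mv (big_pred1 [ffun r => inord 1]).
  idtac.
  have E : (\sum_(r < k.+1) ((([ffun=> inord 1] : {ffun 'I_k.+1 -> 'I_k.+2}) r) : nat) = k.+1)%N.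
    rewrite (eq_bigr (fun _ => 1%N)); first by rewrite sum1_card card_ord.
    by move=> r _; rewrite ffunE inordK.
  rewrite E subnn expr0 mulr1 /multinom subnn fact0 muln1.
  rewrite (eq_bigr (fun _ => 1%N)); last by move=> r _; rewrite ffunE inordK.
  by rewrite prod_nat_const exp1n divn1.
move=> t /=; apply/idP/eqP => [/andP [/forallP Hp Hs]|->].
  apply/ffunP => r; rewrite ffunE; apply: val_inj; rewrite /= inordK //.
  have := sum_pos_ge1 (t := fun r => (t r : nat)) r Hp; rewrite /= => Hk.
  have := leq_trans Hk Hs; have := Hp r; lia.
apply/andP; split; first by apply/forallP => r; rewrite ffunE inordK.
rewrite (eq_bigr (fun _ => 1%N)); first by rewrite sum1_card card_ord.
by move=> r _; rewrite ffunE inordK.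
Qed.

Lemma Mv_zero (R : comPzRingType) d k : (0 < k)%N -> (k <= d)%N ->
  Mv d k (0 : R) = (Dnum d d k)%:R.
Proof.
move=> Hk Hkd.
rewrite /Mv /Dnum natr_sum.
transitivity (\sum_(t : {ffun 'I_k -> 'I_d.+1} | [forall r, (0 < t r)%N] && (\sum_(r < k) (t r : nat) == d)%N)
    (multinom d d (fun r => (t r : nat)))%:R : R).
  rewrite big_mkcond [RHS]big_mkcond; apply: eq_bigr => t _.
  rewrite expr0n; case: [forall r, _] => //=.
  case: (ltngtP (\sum_(r < k) (t r : nat)) d) => H /=.
  - by rewrite subn_eq0 leqNgt H mulr0.
  - by [].
  - by rewrite H subnn eqxx mulr1.
have Hw : (d - k + 2 <= d.+1)%N by lia.
have Hpos : (0 < d - k + 2)%N by lia.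
pose w (t : {ffun 'I_k -> 'I_(d - k + 2)}) : {ffun 'I_k -> 'I_d.+1} := [ffun r => widen_ord Hw (t r)].
pose v (t : {ffun 'I_k -> 'I_d.+1}) : {ffun 'I_k -> 'I_(d - k + 2)} := [ffun r => Ordinal (ltn_pmod (t r) Hpos)].
rewrite (reindex w).
  apply: eq_big => [t|t _].
    rewrite /w; congr (_ && _).
      by apply: eq_forallb => r; rewrite ffunE.
    by congr (_ == _); apply: eq_bigr => r _; rewrite ffunE.
  by congr (_%:R); apply: multinom_ext => r; rewrite ffunE.
exists v => t Ht.
  apply/ffunP => r; rewrite !ffunE; apply: val_inj => /=.
  by rewrite modn_small.
apply/ffunP => r; rewrite !ffunE; apply: val_inj => /=.
rewrite modn_small //.
move: Ht; rewrite inE => /andP [/forallP Hp /eqP Hs].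
have := sum_pos_ge1 (t := fun r => (t r : nat)) r Hp; rewrite /= Hs => H.
lia.
Qed.


Section Multi.
Variables n p : nat.
Local Notation F := 'F_p.

Definition Pphi (phi : 'I_n -> F -> F) : point n p -> F :=
  fun x => \prod_(i < n) phi i (x i).

Definition upd (phi : 'I_n -> F -> F) i (g : F -> F) : 'I_n -> F -> F :=
  fun j => if j == i then g else phi j.

Lemma delta_P i phi : delta i (Pphi phi) = Pphi (upd phi i (@udelta F (phi i))).
Proof.
apply: functional_extensionality => x.
rewrite /delta /Pphi (bigD1 i) //= [X in _ - X](bigD1 i) //= [RHS](bigD1 i) //=.
rewrite /upd eqxx /udelta ffunE eqxx.
rewrite (eq_bigr (fun j => phi j (x j))); last first.
  by move=> j /negbTE Hj; rewrite ffunE Hj addr0.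
rewrite [in RHS](eq_bigr (fun j => phi j (x j))); last first.
  by move=> j /negbTE Hj; rewrite Hj.
by rewrite mulrBl.
Qed.

Lemma iter_delta_P k i phi :
  iter k (delta i) (Pphi phi) = Pphi (upd phi i (iter k (@udelta F) (phi i))).
Proof.
elim: k => [|k IH] /=.
  by congr Pphi; apply: functional_extensionality => j; rewrite /upd; case: eqP => // ->.
rewrite IH delta_P; congr Pphi; apply: functional_extensionality => j.
by rewrite /upd eqxx; case: eqP.
Qed.

Lemma foldr_P (m : expo n p) (s : seq 'I_n) phi :
  foldr (fun i h => iter (m i) (delta i) h) (Pphi phi) s =
  Pphi (fun j => iter (m j * count_mem j s) (@udelta F) (phi j)).
Proof.
elim: s => [|i s IH] /=.
  by congr Pphi; apply: functional_extensionality => j; rewrite muln0.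
rewrite IH iter_delta_P; congr Pphi; apply: functional_extensionality => j.
rewrite /upd; case: eqP => [->|/eqP Hj]; first by rewrite eqxx mulnDr muln1 iterD.
by rewrite eq_sym (negbTE Hj) add0n.
Qed.

Lemma fdiff_P (m : expo n p) phi :
  fdiff m (Pphi phi) = Pphi (fun j => iter (m j) (@udelta F) (phi j)).
Proof.
rewrite /fdiff foldr_P; congr Pphi; apply: functional_extensionality => j.
by rewrite count_uniq_mem ?enum_uniq // mem_enum muln1.
Qed.

Lemma fdiff_lin (I : finType) (m : expo n p) (c : I -> F) (G : I -> point n p -> F) :
  fdiff m (fun x => \sum_(e : I) c e * G e x) = fun x => \sum_(e : I) c e * fdiff m (G e) x.
Proof.
rewrite /fdiff; elim: (enum 'I_n) => [|i s IH] //=.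
rewrite IH; elim: (nat_of_ord (m i)) => [|k IHk] //=.
rewrite IHk; apply: functional_extensionality => x.
by rewrite /delta -sumrB; apply: eq_bigr => e _; rewrite mulrBr.
Qed.

Lemma fdiff_meval (m : expo n p) (f : mpoly n p) (x : point n p) :
  fdiff m (meval f) x =
  \sum_(e : expo n p) f e * \prod_(i < n) Mv (e i) (m i) (x i).
Proof.
have -> : meval f = fun x => \sum_(e : expo n p) f e * Pphi (fun i z => z ^+ e i) x by [].
rewrite fdiff_lin; apply: eq_bigr => e _; rewrite fdiff_P /Pphi.
by congr (_ * _); apply: eq_bigr => i _; rewrite Mv_iter.
Qed.

End Multi.


Section Reidx.
Variables n p : nat.
Local Notation F := 'F_p.

Definition osub (a : 'I_p) (b : nat) : 'I_p :=
  Ordinal (leq_ltn_trans (leq_subr b a) (ltn_ord a)).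

Definition esub (e1 m : expo n p) : expo n p := [ffun i => osub (e1 i) (m i)].

Definition mle (m e : expo n p) : bool := [forall i, (m i <= e i)%N].

Lemma cond_esub (m e0 e' : expo n p) : mle m e0 ->
  [forall i, (e0 i : nat) == (m i + e' i)%N] = (e' == esub e0 m).
Proof.
move=> /forallP H; apply/forallP/eqP => [H1|->] .
  apply/ffunP => i; apply: val_inj; rewrite ffunE /=.
  have := H i; have := eqP (H1 i); lia.
move=> i; rewrite ffunE /=; apply/eqP; have := H i; lia.
Qed.

Lemma cond_nmle (m e0 e' : expo n p) : ~~ mle m e0 ->
  [forall i, (e0 i : nat) == (m i + e' i)%N] = false.
Proof.
move=> /forallPn [i Hi]; apply/negbTE/forallPn; exists i.
apply/negP => /eqP E; move: Hi; rewrite E leq_addr.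
done.
Qed.

Lemma reidx (f : mpoly n p) (m : expo n p) (H : expo n p -> F) :
  \sum_(e' : expo n p) fS f m e' * H e' =
  \sum_(e1 : expo n p | mle m e1) f e1 * H (esub e1 m).
Proof.
under eq_bigr => e' _ do rewrite ffunE mulr_suml big_mkcond.
rewrite exchange_big /= [RHS]big_mkcond; apply: eq_bigr => e0 _.
case: (boolP (mle m e0)) => Hm.
  rewrite -big_mkcond (eq_bigl (fun e' => e' == esub e0 m)); last by move=> e'; rewrite cond_esub.
  by rewrite big_pred1_eq.
by apply: big1 => e' _; rewrite cond_nmle.
Qed.

Lemma fS_esub (f : mpoly n p) (m e1 : expo n p) : mle m e1 -> fS f m (esub e1 m) = f e1.
Proof.
move=> /forallP H; rewrite ffunE (big_pred1 e1) // => e0 /=.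
apply/forallP/eqP => [H1|->].
  apply/ffunP => i; apply: val_inj; have := eqP (H1 i); rewrite ffunE /=; have := H i; lia.
by move=> i; rewrite ffunE /=; apply/eqP; have := H i; lia.
Qed.

End Reidx.


Section Coll.
Variables n p : nat.
Local Notation F := 'F_p.

Definition ozero (a : 'I_p) : 'I_p := osub a a.
Definition eS (m e : expo n p) : expo n p := [ffun i => if insupp m i then e i else ozero (e i)].
Definition eN (m e : expo n p) : expo n p := [ffun i => if insupp m i then ozero (e i) else e i].

Lemma cond_split (m l e' e0 : expo n p) :
  [&& supported m l, [forall i, insupp m i ==> ((e' i : nat) == 0%N)]
    & [forall i, (e0 i : nat) == (l i + e' i)%N]] = (l == eS m e0) && (e' == eN m e0).
Proof.
apply/idP/andP => [/and3P [/forallP H1 /forallP H2 /forallP H3]|[/eqP -> /eqP ->]].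
  split; apply/eqP/ffunP => i; apply: val_inj; rewrite ffunE /=;
  move: (H1 i) (H2 i) (eqP (H3 i)); case: (insupp m i) => /= A B E; rewrite /= ?subnn;
  try move/eqP: A => A; try move/eqP: B => B; lia.
apply/and3P; split; apply/forallP => i; rewrite !ffunE; case: (insupp m i) => //=; rewrite ?subnn ?addn0 //.
Qed.

Definition Xm (x : point n p) (e : expo n p) : F := \prod_(i < n) x i ^+ e i.

Lemma collapse (b : mpoly n p) (m : expo n p) (x : point n p) :
  \sum_(l : expo n p | supported m l) cconst m l * meval (gpart b m l) x =
  \sum_(e0 : expo n p) b e0 * (cconst m (eS m e0) * Xm x (eN m e0)).
Proof.
rewrite big_mkcond /=.
transitivity (\sum_(l : expo n p) \sum_(e' : expo n p) \sum_(e0 : expo n p)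
   (if [&& supported m l, [forall i, insupp m i ==> ((e' i : nat) == 0%N)]
         & [forall i, (e0 i : nat) == (l i + e' i)%N]]
    then b e0 * (cconst m l * Xm x e') else 0)).
  apply: eq_bigr => l _; case: (supported m l) => /=; last first.
    by rewrite big1 // => e' _; rewrite big1.
  rewrite /meval mulr_sumr; apply: eq_bigr => e' _; rewrite ffunE.
  case: [forall i, _] => /=; last by rewrite mul0r mulr0 big1.
  rewrite mulr_suml mulr_sumr big_mkcond; apply: eq_bigr => e0 _.
  by case: [forall i, _] => //; rewrite /Xm; ring.
under eq_bigr => l _ do rewrite exchange_big.
rewrite exchange_big; apply: eq_bigr => e0 _.
under eq_bigr => l _ do under eq_bigr => e' _ do rewrite cond_split.
rewrite (bigD1 (eS m e0)) //=.
rewrite [X in _ + X]big1 ?addr0; last first.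
  by move=> l Hl; apply: big1 => e' _; rewrite (negbTE Hl).
rewrite eqxx /= (bigD1 (eN m e0)) //= eqxx [X in _ + X]big1 ?addr0 //.
by move=> e' He; rewrite (negbTE He).
Qed.

End Coll.


Lemma vanish (p n : nat) (m : expo n p) (x : point n p) (G : expo n p -> 'F_p) :
  \sum_(e : expo n p) G e * \prod_(i < n) Mv (e i) (m i) (x i) =
  \sum_(e : expo n p | mle m e) G e * \prod_(i < n) Mv (e i) (m i) (x i).
Proof.
rewrite (bigID (mle m)) /= [X in _ + X]big1 ?addr0 //.
move=> e /forallPn [i Hi]; rewrite (bigD1 i) //= Mv_lt ?mul0r ?mulr0 //.
by rewrite ltnNge.
Qed.

Lemma notsupp (p n : nat) (m : expo n p) i : insupp m i = false -> (m i : nat) = 0%N.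
Proof. by rewrite /insupp; case: (nat_of_ord (m i)). Qed.

Unset Implicit Arguments.

Theorem mainTheorem9 (p n : nat) (hp : prime p) (f : mpoly n p) (m : expo n p) :
  (forall x : point n p, (forall i, insupp m i -> x i = 0) ->
     fdiff m (meval f) x =
     \sum_(l : expo n p | supported m l && (gpart (fS f m) m l != 0))
        cconst m l * meval (gpart (fS f m) m l) x)
  /\
  ((forall e : expo n p, fS f m e != 0 -> forall i, insupp m i -> (e i : nat) = 0%N) ->
   forall x : point n p,
     fdiff m (meval f) x =
     (\prod_(i < n | insupp m i) (m i)`!)%:R * meval (fS f m) x).
Proof.
split.
- move=> x Hx.
  rewrite fdiff_meval big_mkcondr.
  rewrite [RHS](eq_bigr (fun l => cconst m l * meval (gpart (fS f m) m l) x)); last first.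
    move=> l _; case: eqP => [->|//].
    by rewrite /meval big1 ?mulr0 // => e _; rewrite ffunE mul0r.
  rewrite collapse reidx vanish; apply: eq_bigr => e1 He1; congr (_ * _).
  rewrite /cconst /Xm [X in _ = X * _]big_mkcond -big_split; apply: eq_bigr => i _ /=.
  rewrite !ffunE /=.
  move/forallP: He1 => /(_ i) He1.
  case Hs: (insupp m i).
    rewrite Hx // /ozero /osub /= subnn expr0 mulr1 subnKC // Mv_zero //.
  by rewrite /osub /= (notsupp Hs) Mv0 mul1r subn0.
- move=> Hyp x.
  rewrite fdiff_meval /meval mulr_sumr.
  under [RHS]eq_bigr => e _ do rewrite mulrCA.
  rewrite reidx vanish; apply: eq_bigr => e1 He1.
  case: (eqVneq (f e1) 0) => [->|Hf]; first by rewrite !mul0r.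
  have Hz := Hyp _ (eq_ind_r (fun z => z != 0) Hf (fS_esub f He1)).
  congr (_ * _); rewrite natr_prod [X in _ = X * _]big_mkcond -big_split; apply: eq_bigr => i _ /=.
  rewrite ffunE /=.
  move/forallP: He1 => /(_ i) He1.
  case Hs: (insupp m i).
    have := Hz i Hs; rewrite ffunE /= => Hz'.
    have E : (e1 i : nat) = m i by apply/eqP; rewrite eqn_leq He1 andbT -subn_eq0 Hz'.
    rewrite E subnn expr0 mulr1.
    move: Hs; rewrite /insupp; case: (nat_of_ord (m i)) => // k _.
    by rewrite Mv_eq.
  by rewrite (notsupp Hs) Mv0 mul1r subn0.
Qed.
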